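(* For a suitable choice of absolute constants $c_0>0$, $c_5>0$, the following holds: for $x\geqslant y\geqslant 2$ with $\psi(y)>2\log x$, every integer $q$ with $q\leqslant y^{c_0/\log_2y}$, every non-principal Dirichlet character $\chi$ modulo $q$ and every $\tau\in\mathbb R$, $$\Big|\frac{Z(\beta+i\tau,\chi;y)}{Z_q(\beta,y)}\Big|\leqslant e^{-c_5\mathcal W_q(y,\tau;\chi)}.$$
   Context: For a prime $p$, $\nu_p:=\lfloor\log y/\log p\rfloor$; $\psi(y):=\sum_{p\leqslant y}\nu_p\log p$; $\log_2=\log\log$. For $\Re s>0$, $Z_q(s,y):=\prod_{p\leqslant y,\,p\nmid q}\frac{1-p^{-(\nu_p+1)s}}{1-p^{-s}}$, $Z(s,y):=Z_1(s,y)$, and for a Dirichlet character $\chi$, $Z(s,\chi;y):=\prod_{p\leqslant y}\frac{1-\chi(p)^{\nu_p+1}p^{-(\nu_p+1)s}}{1-\chi(p)p^{-s}}$. When $\psi(y)>2\log x$, $\beta=\beta(x,y)$ is the unique $\sigma>0$ with $-Z'(\sigma,y)/Z(\sigma,y)=\log x$. Finally $\mathcal W_q(y,\tau;\chi):=\sum_{p\leqslant y,\,p\nmid q}\frac{\{1-\Re(\chi(p)p^{-i\tau})\}^2}{p^\beta}$. *)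

(* Defs.v *)
From Stdlib Require Import Reals Lra Lia ZArith Znumtheory Arith List.
From Coquelicot Require Import Coquelicot.
Open Scope R_scope.

Definition is_primeb (p : nat) : bool :=
  if prime_dec (Z.of_nat p) then true else false.
Definition primes_upto (y : R) : list nat :=
  filter is_primeb (seq 0 (S (Z.to_nat (Int_part y)))).

Definition nu (y : R) (p : nat) : nat := Z.to_nat (Int_part (ln y / ln (INR p))).

Definition sumR (l : list nat) (f : nat -> R) : R := fold_right (fun p acc => f p + acc) 0 l.
Definition prodR (l : list nat) (f : nat -> R) : R := fold_right (fun p acc => f p * acc) 1 l.
Definition prodC (l : list nat) (f : nat -> C) : C := fold_right (fun p acc => Cmult (f p) acc) (RtoC 1) l.

Definition psi (y : R) : R := sumR (primes_upto y) (fun p => INR (nu y p) * ln (INR p)).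

Definition cexp (z : C) : C := (exp (fst z) * cos (snd z), exp (fst z) * sin (snd z)).
Definition cpow_neg (a : R) (s : C) : C := cexp (Cmult (Copp s) (RtoC (ln a))).

Definition ndivb (q p : nat) : bool := negb (Nat.eqb (Nat.modulo q p) 0).

Definition Zq (q : nat) (s y : R) : R :=
  prodR (filter (ndivb q) (primes_upto y))
    (fun p => (1 - Rpower (INR p) (- (INR (nu y p + 1)) * s)) / (1 - Rpower (INR p) (- s))).
Definition Z1 (s y : R) : R := Zq 1 s y.

Definition Zchi (s : C) (chi : nat -> C) (y : R) : C :=
  prodC (primes_upto y)
    (fun p => Cdiv (Cminus (RtoC 1) (Cmult (Cpow (chi p) (nu y p + 1))
                                     (cpow_neg (INR p) (Cmult (RtoC (INR (nu y p + 1))) s))))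
                   (Cminus (RtoC 1) (Cmult (chi p) (cpow_neg (INR p) s)))).

Definition dirichlet_character (q : nat) (chi : nat -> C) : Prop :=
  (1 <= q)%nat /\
  chi 1%nat = RtoC 1 /\
  (forall m n : nat, chi (m * n)%nat = Cmult (chi m) (chi n)) /\
  (forall n : nat, chi (n + q)%nat = chi n) /\
  (forall n : nat, chi n = RtoC 0 <-> Nat.gcd n q <> 1%nat).

Definition non_principal (q : nat) (chi : nat -> C) : Prop :=
  exists n : nat, Nat.gcd n q = 1%nat /\ chi n <> RtoC 1.

Definition Wq (q : nat) (y tau beta : R) (chi : nat -> C) : R :=
  sumR (filter (ndivb q) (primes_upto y))
    (fun p => (1 - Re (Cmult (chi p) (cpow_neg (INR p) (0, tau)))) ^ 2 / Rpower (INR p) beta).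

Definition is_beta (x y sigma : R) : Prop :=
  0 < sigma /\ - Derive (fun s => Z1 s y) sigma / Z1 sigma y = ln x.

(* Main.v *)
Require Import Defs.
From Stdlib Require Import Reals Lra Lia Psatz ZArith Znumtheory Arith List.
From Coquelicot Require Import Coquelicot.
Open Scope R_scope.

Fixpoint Sc (z : C) (n : nat) : C :=
  match n with O => RtoC 1 | S k => Cplus (RtoC 1) (Cmult z (Sc z k)) end.
Fixpoint Sr (r : R) (n : nat) : R :=
  match n with O => 1 | S k => 1 + r * Sr r k end.

Lemma Sr_ge1 r n : 0 <= r -> 1 <= Sr r n.
Proof. intros. induction n; simpl; nra. Qed.

Lemma Sc_le z r n : Cmod z <= r -> Cmod (Sc z n) <= Sr r n.
Proof.
  intros H. induction n; simpl.
  - rewrite Cmod_1; lra.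
  - eapply Rle_trans. apply Cmod_triangle. rewrite Cmod_1, Cmod_mult.
    assert (0 <= Cmod z) by apply Cmod_ge_0. assert (0 <= Cmod (Sc z n)) by apply Cmod_ge_0.
    nra.
Qed.

Lemma one_plus_bound (r : R) (w : C) : 0 < r < 1 -> Cmod w <= 1 ->
  Cmod (Cplus (RtoC 1) (Cmult (RtoC r) w)) <= (1 + r) * (1 - r * (1 - Re w) / 8).
Proof.
  intros Hr Hw.
  assert (H2 := Cmod2_alt w). assert (H0 := Cmod_ge_0 w).
  destruct w as [a b]. unfold Re, Im in *; simpl fst in *; simpl snd in *.
  assert (Ha: a*a + b*b <= 1) by nra.
  assert (a <= 1 /\ -1 <= a) by nra.
  unfold Cmod, Cplus, Cmult, RtoC; cbn [fst snd].
  match goal with |- sqrt ?X <= ?Y => assert (X <= Y*Y) end.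
  
  { assert (0 <= r * (1-a)) by nra.
    assert ((1+r)*(1+r) <= 4) by nra.
    assert ((1+r)*(1+r) * (r*(1-a)) <= 4 * (r*(1-a))) by nra.
    assert (0 <= ((1+r) * (r*(1-a)))^2) by apply pow2_ge_0.
    assert (r*r*(a*a+b*b) <= r*r) by nra.
    match goal with |- ?L <= _ => assert (EL: L = 1 + 2*r*a + r*r*(a*a+b*b)) by ring end.
    rewrite EL.
    assert (HE: (1 + r) * (1 - r * (1 - a) / 8) * ((1 + r) * (1 - r * (1 - a) / 8)) =
      (1+r)*(1+r) - (1+r)*(1+r)*(r*(1-a))/4 + ((1+r)*(r*(1-a)))^2/64) by field.
    rewrite HE. lra. }
  assert (HY: 0 <= (1 + r) * (1 - r * (1 - a) / 8)) by nra.
  rewrite <- (sqrt_square _ HY). apply sqrt_le_1_alt. lra.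
Qed.

Lemma Cmod_rw (r : R) (w : C) : 0 <= r -> Cmod w <= 1 -> Cmod (Cmult (RtoC r) w) <= r.
Proof. intros. rewrite Cmod_mult, Cmod_R, Rabs_pos_eq by lra.
  assert (0 <= Cmod w) by apply Cmod_ge_0. nra. Qed.

Lemma Re_bounds (w : C) : Cmod w <= 1 -> -1 <= Re w <= 1.
Proof. intros. assert (H1 := re_le_Cmod w). apply Rabs_le_between' in H1 || idtac.
  unfold Rabs in H1. destruct (Rcase_abs (Re w)); lra. Qed.

Lemma Sc_step z k B : Cmod (Sc z k) <= B ->
  Cmod (Sc z (S (S k))) <= Cmod (Cplus (RtoC 1) z) + Cmod z * Cmod z * B.
Proof.
  intros H. assert (E: Sc z (S (S k)) = Cplus (Cplus (RtoC 1) z) (Cmult (Cmult z z) (Sc z k))).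
  { simpl. ring. }
  rewrite E. eapply Rle_trans. apply Cmod_triangle. rewrite !Cmod_mult.
  assert (0 <= Cmod z) by apply Cmod_ge_0. 
  assert (0 <= Cmod z * Cmod z) by nra. nra.
Qed.

Lemma Sc_main (r : R) (w : C) n : 0 < r < 1 -> Cmod w <= 1 -> (1 <= n)%nat ->
  Cmod (Sc (Cmult (RtoC r) w) n) <= (1 - r * (1 - Re w) / 16) * Sr r n.
Proof.
  intros Hr Hw Hn.
  set (z := Cmult (RtoC r) w).
  assert (Hz : Cmod z <= r) by (apply Cmod_rw; lra).
  assert (Hz0 : 0 <= Cmod z) by apply Cmod_ge_0.
  assert (H1 := one_plus_bound r w Hr Hw). fold z in H1.
  assert (HR := Re_bounds w Hw).
  set (e := r * (1 - Re w) / 16) in *.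
  assert (He : 0 <= e <= 1/8) by (unfold e; nra).
  replace (r * (1 - Re w) / 8) with (2 * e) in H1 by (unfold e; field).
  assert (Hzz : Cmod z * Cmod z <= r * r) by nra.
  assert (forall k, Cmod (Sc z (S k)) <= (1 - e) * Sr r (S k) /\
                    Cmod (Sc z (S (S k))) <= (1 - e) * Sr r (S (S k))).
  { induction k.
    - split.
      + simpl. rewrite Cmult_1_r. nra.
      + eapply Rle_trans. apply (Sc_step z 0 1). simpl. rewrite Cmod_1. lra.
        simpl. assert (0 <= e * (1 + r - r*r)) by (apply Rmult_le_pos; nra). nra.
    - destruct IHk as [IH1 IH2]. split. exact IH2.
      eapply Rle_trans. apply (Sc_step z (S k) _ IH1).
      assert (0 <= Sr r (S k)) by (apply Rle_trans with 1; [lra| apply Sr_ge1; lra]).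
      assert (0 <= (1 - e) * Sr r (S k)) by nra.
      assert (Cmod z * Cmod z * ((1 - e) * Sr r (S k)) <= r * r * ((1 - e) * Sr r (S k))) by nra.
      change (Sr r (S (S (S k)))) with (1 + r * (1 + r * Sr r (S k))). nra. }
  destruct n. lia. apply H.
Qed.

Lemma Sc_final (r : R) (w : C) n : 0 < r < 1 -> Cmod w <= 1 -> (1 <= n)%nat ->
  Cmod (Sc (Cmult (RtoC r) w) n) <= Sr r n * exp (- (1/32) * ((1 - Re w) ^ 2 * r)).
Proof.
  intros Hr Hw Hn. eapply Rle_trans. apply Sc_main; auto.
  assert (HR := Re_bounds w Hw).
  assert (1 <= Sr r n) by (apply Sr_ge1; lra).
  assert (1 - r * (1 - Re w) / 16 <= exp (- (1/32) * ((1 - Re w) ^ 2 * r))).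
  { eapply Rle_trans; [|apply exp_ineq1_le].
    assert (0 <= r * (1 - Re w) * (2 - (1 - Re w))) by (apply Rmult_le_pos; nra). nra. }
  rewrite (Rmult_comm (Sr r n)). apply Rmult_le_compat_r; lra.
Qed.

Lemma cexp_add a b : cexp (Cplus a b) = Cmult (cexp a) (cexp b).
Proof.
  destruct a as [a1 a2], b as [b1 b2]. unfold cexp, Cplus, Cmult. cbn [fst snd].
  rewrite exp_plus, cos_plus, sin_plus. apply injective_projections; cbn [fst snd]; ring.
Qed.

Lemma cexp_0 : cexp (RtoC 0) = RtoC 1.
Proof. unfold cexp, RtoC. cbn [fst snd]. rewrite exp_0, cos_0, sin_0.
  apply injective_projections; cbn [fst snd]; ring. Qed.

Lemma cexp_nat w n : cexp (Cmult (RtoC (INR n)) w) = Cpow (cexp w) n.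
Proof.
  induction n.
  - simpl. replace (Cmult (RtoC 0) w) with (RtoC 0) by ring. apply cexp_0.
  - rewrite S_INR. replace (Cmult (RtoC (INR n + 1)) w) with (Cplus w (Cmult (RtoC (INR n)) w)).
    + rewrite cexp_add, IHn. reflexivity.
    + rewrite RtoC_plus. ring.
Qed.

Lemma cpow_neg_nat P s n : cpow_neg P (Cmult (RtoC (INR n)) s) = Cpow (cpow_neg P s) n.
Proof.
  unfold cpow_neg. rewrite <- cexp_nat. f_equal. ring.
Qed.

Lemma cpow_neg_split P b t : 0 < P ->
  cpow_neg P (b, t) = Cmult (RtoC (Rpower P (- b))) (cpow_neg P (0, t)).
Proof.
  intros HP. unfold cpow_neg, cexp, Rpower, Copp, Cmult, RtoC. cbn [fst snd].
  replace (- 0 * ln P - - t * 0) with 0 by ring. rewrite exp_0.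
  apply injective_projections; cbn [fst snd].
  - replace (- b * ln P - - t * 0) with (- b * ln P) by ring.
    replace (- b * 0 + - t * ln P) with (- 0 * 0 + - t * ln P) by ring. ring.
  - replace (- b * ln P - - t * 0) with (- b * ln P) by ring.
    replace (- b * 0 + - t * ln P) with (- 0 * 0 + - t * ln P) by ring. ring.
Qed.

Lemma cpow_neg_unit P t : Cmod (cpow_neg P (0, t)) = 1.
Proof.
  unfold cpow_neg, cexp, Cmod, Copp, Cmult, RtoC. cbn [fst snd].
  replace (- 0 * ln P - - t * 0) with 0 by ring. rewrite exp_0.
  set (x := - 0 * 0 + - t * ln P). assert (H := sin2_cos2 x). unfold Rsqr in H.
  match goal with |- sqrt ?X = 1 => replace X with 1 end; [apply sqrt_1|].
  rewrite <- H at 1. ring.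
Qed.

Lemma geom_C z n : Cmult (Cminus (RtoC 1) z) (Sc z n) = Cminus (RtoC 1) (Cpow z (S n)).
Proof.
  induction n.
  - simpl. ring.
  - change (Sc z (S n)) with (Cplus (RtoC 1) (Cmult z (Sc z n))).
    change (Cpow z (S (S n))) with (Cmult z (Cpow z (S n))).
    replace (Cmult (Cminus (RtoC 1) z) (Cplus (RtoC 1) (Cmult z (Sc z n))))
      with (Cplus (Cminus (RtoC 1) z) (Cmult z (Cmult (Cminus (RtoC 1) z) (Sc z n)))) by ring.
    rewrite IHn. ring.
Qed.

Lemma geom_R r n : (1 - r) * Sr r n = 1 - r ^ (S n).
Proof. induction n. simpl. ring. change (Sr r (S n)) with (1 + r * Sr r n).
  change (r ^ S (S n)) with (r * r ^ S n).
  replace ((1-r)*(1 + r*Sr r n)) with (1 - r + r*((1-r)*Sr r n)) by ring. rewrite IHn. ring. Qed.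

Lemma factor_bound (c : C) (P b t : R) (n : nat) : 1 < P -> 0 < b -> Cmod c <= 1 -> (1 <= n)%nat ->
  Cmod (Cdiv (Cminus (RtoC 1) (Cmult (Cpow c (n + 1))
                 (cpow_neg P (Cmult (RtoC (INR (n + 1))) (b, t)))))
             (Cminus (RtoC 1) (Cmult c (cpow_neg P (b, t)))))
  <= (1 - Rpower P (- (INR (n + 1)) * b)) / (1 - Rpower P (- b)) *
     exp (- (1/32) * ((1 - Re (Cmult c (cpow_neg P (0, t)))) ^ 2 / Rpower P b)).
Proof.
  intros HP Hb Hc Hn.
  assert (HlnP : 0 < ln P) by (rewrite <- ln_1; apply ln_increasing; lra).
  set (r := Rpower P (- b)).
  assert (Hr : 0 < r < 1).
  { unfold r, Rpower. split. apply exp_pos. rewrite <- exp_0. apply exp_increasing. nra. }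
  set (e := cpow_neg P (0, t)).
  set (w := Cmult c e).
  assert (Hw : Cmod w <= 1).
  { unfold w. rewrite Cmod_mult. unfold e. rewrite cpow_neg_unit. lra. }
  assert (Hs : cpow_neg P (b, t) = Cmult (RtoC r) e) by (apply cpow_neg_split; lra).
  set (z := Cmult (RtoC r) w).
  assert (Hz : Cmod z <= r) by (apply Cmod_rw; lra).
  assert (Hnum : Cmult (Cpow c (n + 1)) (cpow_neg P (Cmult (RtoC (INR (n + 1))) (b, t)))
                 = Cpow z (S n)).
  { rewrite cpow_neg_nat, Hs, <- Cpow_mult_l, Nat.add_1_r. unfold z, w. f_equal. ring. }
  assert (Hden : Cmult c (cpow_neg P (b, t)) = z).
  { rewrite Hs. unfold z, w. ring. }
  rewrite Hnum, Hden.
  assert (Hz1 : Cminus (RtoC 1) z <> RtoC 0).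
  { intro H. assert (z = RtoC 1). { apply (f_equal (fun u => Cminus (RtoC 1) u)) in H.
      replace (Cminus (RtoC 1) (Cminus (RtoC 1) z)) with z in H by ring. rewrite H. ring. }
    rewrite H0, Cmod_1 in Hz. lra. }
  replace (Cdiv (Cminus (RtoC 1) (Cpow z (S n))) (Cminus (RtoC 1) z)) with (Sc z n).
  2:{ rewrite <- geom_C. field. exact Hz1. }
  replace (Rpower P (- INR (n + 1) * b)) with (r ^ (S n)).
  2:{ unfold r. rewrite <- Rpower_pow by (apply exp_pos). rewrite Rpower_mult. f_equal.
      rewrite S_INR, plus_INR. simpl INR. ring. }
  replace ((1 - r ^ S n) / (1 - r)) with (Sr r n).
  2:{ rewrite <- geom_R. field. lra. }
  replace ((1 - Re w) ^ 2 / Rpower P b) with ((1 - Re w) ^ 2 * r).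
  2:{ unfold r. rewrite Rpower_Ropp. reflexivity. }
  apply Sc_final; auto.
Qed.

Lemma sumR_ge (l : list nat) (f : nat -> R) m : (forall k, 0 <= f k) -> In m l -> f m <= sumR l f.
Proof.
  intros Hf. induction l; simpl; intros H. contradiction.
  destruct H as [H|H]. subst. assert (0 <= sumR l f).
  { clear IHl. induction l as [|b l IH]; simpl. lra. specialize (Hf b). lra. } lra.
  specialize (IHl H). specialize (Hf a). lra.
Qed.

Lemma chi_le1 q chi n : dirichlet_character q chi -> Cmod (chi n) <= 1.
Proof.
  intros (Hq & H1 & Hm & Hp & H0).
  assert (Hper : forall a k, chi (a + k * q)%nat = chi a).
  { intros a k. induction k. simpl. rewrite Nat.add_0_r. reflexivity.
    replace (a + S k * q)%nat with ((a + k * q) + q)%nat by lia. rewrite Hp. exact IHk. }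
  set (M := sumR (seq 0 q) (fun m => Cmod (chi m))).
  assert (HM : forall m, Cmod (chi m) <= M).
  { intros m. rewrite (Nat.div_mod_eq m q).
    replace (q * (m / q) + m mod q)%nat with (m mod q + (m / q) * q)%nat by lia.
    rewrite Hper. apply (sumR_ge (seq 0 q) (fun m => Cmod (chi m))). intros; apply Cmod_ge_0.
    apply in_seq. split. lia. simpl. apply Nat.mod_upper_bound. lia. }
  assert (Hpow : forall k, chi (Nat.pow n k) = Cpow (chi n) k).
  { induction k. simpl. exact H1. simpl. rewrite Hm, IHk. reflexivity. }
  destruct (Rle_dec (Cmod (chi n)) 1) as [h|h]. exact h.
  exfalso. assert (Rabs (Cmod (chi n)) > 1).
  { rewrite Rabs_pos_eq by apply Cmod_ge_0. lra. }
  destruct (Pow_x_infinity _ H (M + 1)) as [N HN].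
  specialize (HN N (le_n N)). rewrite Rabs_pos_eq in HN.
  2:{ apply pow_le. apply Cmod_ge_0. }
  rewrite <- Cmod_pow, <- Hpow in HN. specialize (HM (Nat.pow n N)). lra.
Qed.

Lemma primes_facts y p : 2 <= y -> In p (primes_upto y) ->
  (2 <= p)%nat /\ INR p <= y /\ (1 <= nu y p)%nat.
Proof.
  intros Hy Hin. unfold primes_upto in Hin. apply filter_In in Hin as [Hs Hpr].
  assert (Hp2 : (2 <= p)%nat).
  { unfold is_primeb in Hpr. destruct (prime_dec (Z.of_nat p)) as [Hp|]; [|discriminate].
    apply prime_ge_2 in Hp. lia. }
  apply in_seq in Hs.
  destruct (base_Int_part y) as [Hi1 Hi2].
  assert (HI : (-1 < Int_part y)%Z) by (apply lt_IZR; lra).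
  assert (HpY : INR p <= y).
  { apply Rle_trans with (IZR (Int_part y)); auto.
    rewrite INR_IZR_INZ. apply IZR_le. lia. }
  split; [exact Hp2|split; [exact HpY|]].
  assert (HP : 2 <= INR p) by (replace 2 with (INR 2) by (simpl; lra); apply le_INR; lia).
  assert (Hl : 0 < ln (INR p)) by (rewrite <- ln_1; apply ln_increasing; lra).
  assert (Hl2 : ln (INR p) <= ln y).
  { destruct (Req_dec (INR p) y) as [E|E]. rewrite E; lra.
    left. apply ln_increasing; lra. }
  assert (Hv : 1 <= ln y / ln (INR p)).
  { apply Rmult_le_reg_r with (ln (INR p)); auto. unfold Rdiv.
    rewrite Rmult_assoc, Rinv_l by lra. lra. }
  destruct (base_Int_part (ln y / ln (INR p))) as [Hj1 Hj2].
  assert (HJ : (0 < Int_part (ln y / ln (INR p)))%Z) by (apply lt_IZR; lra).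
  unfold nu. lia.
Qed.

Lemma prodR_cons a l f : prodR (a :: l) f = f a * prodR l f. Proof. reflexivity. Qed.
Lemma sumR_cons a l f : sumR (a :: l) f = f a + sumR l f. Proof. reflexivity. Qed.
Lemma prodC_cons a l f : prodC (a :: l) f = Cmult (f a) (prodC l f). Proof. reflexivity. Qed.
Lemma filter_cons' {A} (f : A -> bool) a l : filter f (a :: l) = if f a then a :: filter f l else filter f l.
Proof. reflexivity. Qed.

Lemma prod_bound q chi y b t (l : list nat) : dirichlet_character q chi -> 0 < b -> 2 <= y ->
  (forall p, In p l -> In p (primes_upto y)) ->
  Cmod (prodC l
    (fun p => Cdiv (Cminus (RtoC 1) (Cmult (Cpow (chi p) (nu y p + 1))
                                     (cpow_neg (INR p) (Cmult (RtoC (INR (nu y p + 1))) (b, t)))))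
                   (Cminus (RtoC 1) (Cmult (chi p) (cpow_neg (INR p) (b, t))))))
  <= prodR (filter (ndivb q) l)
    (fun p => (1 - Rpower (INR p) (- (INR (nu y p + 1)) * b)) / (1 - Rpower (INR p) (- b)))
   * exp (- (1/32) * sumR (filter (ndivb q) l)
    (fun p => (1 - Re (Cmult (chi p) (cpow_neg (INR p) (0, t)))) ^ 2 / Rpower (INR p) b)).
Proof.
  intros Hchi Hb Hy. induction l as [|p l IH]; intros Hl.
  - simpl. rewrite Cmod_1, Rmult_0_r, exp_0. lra.
  - assert (Hpl : In p (primes_upto y)) by (apply Hl; left; auto).
    destruct (primes_facts y p Hy Hpl) as (Hp2 & HpY & Hnu).
    assert (HP : 1 < INR p) by (replace 1 with (INR 1) by (simpl; lra); apply lt_INR; lia).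
    assert (IH' := IH (fun x h => Hl x (or_intror h))). clear IH.
    rewrite prodC_cons, Cmod_mult, filter_cons'.
    assert (Hlnp : 0 < ln (INR p)) by (rewrite <- ln_1; apply ln_increasing; lra).
    destruct (ndivb q p) eqn:Hd.
    + rewrite prodR_cons, sumR_cons.
      set (F := Cdiv _ _).
      assert (HF := factor_bound (chi p) (INR p) b t (nu y p) HP Hb (chi_le1 q chi p Hchi) Hnu).
      fold F in HF.
      set (G := (1 - Rpower (INR p) (- INR (nu y p + 1) * b)) / (1 - Rpower (INR p) (- b))) in *.
      set (W := (1 - Re (Cmult (chi p) (cpow_neg (INR p) (0, t)))) ^ 2 / Rpower (INR p) b) in *.
      set (G' := prodR _ _) in *. set (W' := sumR _ _) in *.
      replace (- (1 / 32) * (W + W')) with (- (1/32) * W + - (1/32) * W') by ring.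
      rewrite exp_plus.
      replace (G * G' * (exp (- (1 / 32) * W) * exp (- (1 / 32) * W')))
        with ((G * exp (- (1 / 32) * W)) * (G' * exp (- (1 / 32) * W'))) by ring.
      apply Rmult_le_compat; auto; apply Cmod_ge_0.
    + assert (Hc0 : chi p = RtoC 0).
      { destruct Hchi as (Hq & _ & _ & _ & H0). apply H0.
        unfold ndivb in Hd. apply Bool.negb_false_iff, Nat.eqb_eq in Hd.
        apply Nat.Lcm0.mod_divide in Hd. apply Nat.divide_gcd_iff in Hd. lia. }
      rewrite Hc0, Nat.add_1_r.
      match goal with |- Cmod ?X * _ <= _ => replace X with (RtoC 1) end.
      2:{ simpl Cpow. rewrite !Cmult_0_l. unfold Cminus. rewrite Copp_0, !Cplus_0_r.
          field. }
      rewrite Cmod_1, Rmult_1_l. exact IH'.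
Qed.

Lemma Rpower_lt1 P x : 1 < P -> 0 < x -> Rpower P (- x) < 1.
Proof.
  intros. unfold Rpower. rewrite <- exp_0. apply exp_increasing.
  assert (0 < ln P) by (rewrite <- ln_1; apply ln_increasing; lra). nra.
Qed.

Lemma Zq_pos q b y : 0 < b -> 2 <= y -> 0 < Zq q b y.
Proof.
  intros Hb Hy. unfold Zq.
  assert (H : forall l, (forall p, In p l -> In p (primes_upto y)) ->
    0 < prodR l (fun p => (1 - Rpower (INR p) (- INR (nu y p + 1) * b)) / (1 - Rpower (INR p) (- b)))).
  { induction l as [|p l IH]; intros Hl. simpl. lra.
    rewrite prodR_cons. apply Rmult_lt_0_compat.
    - destruct (primes_facts y p Hy (Hl p (or_introl eq_refl))) as (Hp2 & _ & _).
      assert (HP : 1 < INR p) by (replace 1 with (INR 1) by (simpl; lra); apply lt_INR; lia).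
      assert (0 < INR (nu y p + 1)) by (apply lt_0_INR; lia).
      assert (Rpower (INR p) (- b) < 1) by (apply Rpower_lt1; lra).
      replace (- INR (nu y p + 1) * b) with (- (INR (nu y p + 1) * b)) by ring.
      assert (Rpower (INR p) (- (INR (nu y p + 1) * b)) < 1) by (apply Rpower_lt1; nra).
      apply Rdiv_lt_0_compat; lra.
    - apply IH. intros; apply Hl; right; auto. }
  apply H. intros p Hp. apply filter_In in Hp. tauto.
Qed.

Theorem mainTheorem11 :
  exists c0 c5 : R, 0 < c0 /\ 0 < c5 /\
  forall (x y beta : R) (q : nat) (chi : nat -> C) (tau : R),
    2 <= y -> y <= x -> psi y > 2 * ln x ->
    is_beta x y beta ->
    INR q <= Rpower y (c0 / ln (ln y)) ->
    dirichlet_character q chi -> non_principal q chi ->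
    Cmod (Cdiv (Zchi (beta, tau) chi y) (RtoC (Zq q beta y)))
      <= exp (- c5 * Wq q y tau beta chi).
Proof.
  exists 1, (1/32). split. lra. split. lra.
  intros x y beta q chi tau Hy _ _ [Hb _] _ Hchi _.
  assert (HZ := Zq_pos q beta y Hb Hy).
  assert (HZ0 : RtoC (Zq q beta y) <> RtoC 0).
  { intro E. apply RtoC_inj in E. lra. }
  rewrite Cmod_div by exact HZ0. rewrite Cmod_R, Rabs_pos_eq by lra.
  assert (HB := prod_bound q chi y beta tau (primes_upto y) Hchi Hb Hy (fun p h => h)).
  unfold Zchi, Wq. unfold Zq in HZ |- *.
  apply Rmult_le_reg_r with (prodR (filter (ndivb q) (primes_upto y))
    (fun p => (1 - Rpower (INR p) (- INR (nu y p + 1) * beta)) / (1 - Rpower (INR p) (- beta)))).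
  exact HZ.
  unfold Rdiv at 1. rewrite Rmult_assoc, Rinv_l by lra. rewrite Rmult_1_r.
  rewrite Rmult_comm. exact HB.
Qed.
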